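(* Let $k>1$. The minimal elements, among the subquasivarieties of $\mathcal{Q}(\mathbf{ŁV}_{k+1})$ that strictly contain the class of Boolean algebras $\mathcal{Q}(\mathbf{ŁV}_2)$, are exactly the quasivarieties $\mathcal{Q}(\mathbf{ŁV}_{q+1}\times\mathbf{ŁV}_2)$ with $q>1$ a prime dividing $k$.
   Context: $\mathbf{ŁV}_{n+1}$ is the MV-algebra (Łukasiewicz chain) on $\{0,\frac1n,\dots,1\}$ with $\neg x=1-x$, $x\oplus y=\min\{1,x+y\}$; $\mathbf{ŁV}_2$ is the two-element Boolean algebra. $\mathcal{Q}(K)$ denotes the quasivariety generated by $K$. *)

(* Defs.v *)
From mathcomp Require Import all_boot.
From Stdlib Require List.
Set Implicit Arguments. Unset Strict Implicit. Unset Printing Implicit Defensive.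

Record mvAlg := MvAlg {
  carrier :> Type;
  mv_zero : carrier;
  mv_neg : carrier -> carrier;
  mv_oplus : carrier -> carrier -> carrier }.

Inductive term :=
| TVar of nat
| TZero
| TNeg of term
| TOplus of term & term.

Fixpoint eval (A : mvAlg) (v : nat -> A) (t : term) : A :=
  match t with
  | TVar i => v i
  | TZero => @mv_zero A
  | TNeg s => @mv_neg A (eval v s)
  | TOplus s u => @mv_oplus A (eval v s) (eval v u)
  end.

(* A quasi-identity  (s1 = t1 & ... & sn = tn) => s = t. *)
Definition quasi_identity := (list (term * term) * (term * term))%type.

Definition sat (A : mvAlg) (q : quasi_identity) : Prop :=
  forall v : nat -> A,
    (forall e, List.In e q.1 -> eval v e.1 = eval v e.2) ->
    eval v q.2.1 = eval v q.2.2.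

Definition mvClass := mvAlg -> Prop.

Definition subclass (K L : mvClass) : Prop := forall A, K A -> L A.
Definition sameclass (K L : mvClass) : Prop := subclass K L /\ subclass L K.
Definition strict_subclass (K L : mvClass) : Prop :=
  subclass K L /\ ~ subclass L K.

Definition is_quasivariety (Q : mvClass) : Prop :=
  exists Sigma : quasi_identity -> Prop,
    forall A, Q A <-> (forall q, Sigma q -> sat A q).

(* The quasivariety generated by K: models of all quasi-identities valid in K
   (equal to ISPPu(K) by Mal'cev's theorem). *)
Definition Qgen (K : mvClass) : mvClass :=
  fun A => forall q, (forall B, K B -> sat B q) -> sat A q.

Definition single (A : mvAlg) : mvClass := fun B => B = A.

(* ŁV_{n+1}: the chain {0, 1/n, ..., 1}, element i/n encoded as i : 'I_n.+1,
   with ¬x = 1 - x and x ⊕ y = min(1, x+y). *)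
Definition LV (n : nat) : mvAlg :=
  @MvAlg 'I_n.+1 ord0
    (fun x => inord (n - x))
    (fun x y => inord (minn n (x + y))).

Definition prodA (A B : mvAlg) : mvAlg :=
  @MvAlg (A * B)%type (@mv_zero A, @mv_zero B)
    (fun x => (@mv_neg A x.1, @mv_neg B x.2))
    (fun x y => (@mv_oplus A x.1 y.1, @mv_oplus B x.2 y.2)).

(* Main.v *)
Require Import Defs.
From mathcomp Require Import all_boot zify.
From Stdlib Require Import Classical FunctionalExtensionality.
Set Implicit Arguments. Unset Strict Implicit. Unset Printing Implicit Defensive.

Definition is_hom (A B : mvAlg) (f : A -> B) :=
  [/\ f (@mv_zero A) = @mv_zero B,
      forall x, f (@mv_neg A x) = @mv_neg B (f x) &
      forall x y, f (@mv_oplus A x y) = @mv_oplus B (f x) (f y)].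

Lemma hom_eval (A B : mvAlg) (f : A -> B) (v : nat -> A) t : is_hom f -> eval (fun i => f (v i)) t = f (eval v t).
Proof. case=> h0 hn ho; elim: t => //= [s -> | s -> u ->]; by rewrite ?hn ?ho ?h0. Qed.

Lemma hom_comp (A B C : mvAlg) (f : A -> B) (g : B -> C) : is_hom f -> is_hom g -> is_hom (fun x => g (f x)).
Proof. by case=> ? ? ?; case=> ? ? ?; split=> *; congruence. Qed.

Lemma hom_fst (A B : mvAlg) : is_hom (fun x : prodA A B => x.1). Proof. by []. Qed.
Lemma hom_snd (A B : mvAlg) : is_hom (fun x : prodA A B => x.2). Proof. by []. Qed.
Lemma hom_pair (A B C : mvAlg) (f : A -> B) (g : A -> C) : is_hom f -> is_hom g ->
  is_hom (fun x => (f x, g x) : prodA B C).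
Proof. by case=> h1 h2 h3; case=> g1 g2 g3; split=> * /=; rewrite ?h1 ?g1 ?h2 ?g2 ?h3 ?g3. Qed.

Lemma sat_inj (A B : mvAlg) (f : A -> B) q : is_hom f -> injective f -> sat B q -> sat A q.
Proof.
move=> hf fi hB v hp; apply: fi; rewrite -!hom_eval //; apply: hB => e he.
by rewrite !hom_eval // hp.
Qed.

Lemma sat_prod (A B : mvAlg) q : sat A q -> sat B q -> sat (prodA A B) q.
Proof.
move=> hA hB v hp.
have e1 t : (eval v t).1 = eval (fun i => (v i).1) t by rewrite (hom_eval _ _ (@hom_fst A B)).
have e2 t : (eval v t).2 = eval (fun i => (v i).2) t by rewrite (hom_eval _ _ (@hom_snd A B)).
apply: injective_projections; rewrite ?e1 ?e2; [apply: hA|apply: hB] => e he;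
  by rewrite -?e1 -?e2 hp.
Qed.

Lemma Qgen_qv K : is_quasivariety (Qgen K).
Proof. by exists (fun q => forall B, K B -> sat B q). Qed.

Lemma Qgen_single_in A : Qgen (single A) A.
Proof. by move=> q; apply. Qed.

Lemma qv_sub (Q : mvClass) A : is_quasivariety Q -> Q A -> subclass (Qgen (single A)) Q.
Proof.
case=> S hS hA B hB; apply/(hS B) => q Sq; apply: hB => C ->; by move/(hS A): hA; apply.
Qed.

Lemma Qgen_single_sub A B : Qgen (single B) A -> subclass (Qgen (single A)) (Qgen (single B)).
Proof. move=> h; apply: qv_sub => //; exact: Qgen_qv. Qed.

Lemma Qgen_inj (A B : mvAlg) (f : A -> B) : is_hom f -> injective f -> Qgen (single B) A.
Proof. move=> hf fi q hq; apply: sat_inj hf fi _; exact: hq. Qed.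

Lemma qv_prod (Q : mvClass) (A B : mvAlg) : is_quasivariety Q -> Q A -> Q B -> Q (prodA A B).
Proof. case=> S hS hA hB; apply/(hS (prodA A B)) => q Sq; apply: sat_prod; by [move/(hS A): hA; apply | move/(hS B): hB; apply]. Qed.

Lemma qv_inj (Q : mvClass) (A B : mvAlg) (f : A -> B) : is_quasivariety Q -> Q B -> is_hom f -> injective f -> Q A.
Proof. case=> S hS hB hf fi; apply/(hS A) => q Sq; apply: sat_inj hf fi _; by move/(hS B): hB; apply. Qed.

Lemma arith a n : 0 < a < n ->
  exists p, [/\ prime p, p %| n & exists2 r, r < n & (r.+1 * a) %% n = n %/ p].
Proof.
move=> ha.
have n0 : 0 < n by lia.
case: (Bezoutr a n0) => u _.
have g0 : 0 < gcdn a n by rewrite gcdn_gt0; lia.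
have ga : gcdn a n <= a by apply: dvdn_leq; [lia | exact: dvdn_gcdl].
have hn : n = n %/ gcdn a n * gcdn a n by rewrite divnK // dvdn_gcdr.
move: (gcdn a n) g0 ga hn => g g0 ga hn /dvdnP [k hk].
move: (n %/ g) hn => d hn.
have d1 : 1 < d.
  rewrite ltnNge; apply/negP => h.
  have : d * g <= 1 * g by rewrite leq_mul2r h orbT.
  lia.
have pp : prime (pdiv d) := pdiv_prime d1.
have pd : pdiv d %| d := pdiv_dvd d.
move: (pdiv d) pp pd => p pp pd.
have hd : d = d %/ p * p by rewrite divnK.
move: (d %/ p) hd => e hd.
have p1 := prime_gt1 pp.
have e0 : 0 < e by rewrite lt0n; apply/eqP => e0; rewrite e0 mul0n in hd; lia.
exists p; split => //.
  by rewrite hn hd -mulnA dvdn_mull // dvdn_mulr.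
have hnp : n %/ p = e * g by rewrite hn hd mulnAC mulnK //; lia.
rewrite hnp.
set r1 := (u * (p.-1 * e)) %% n.
have key : (r1 * a) %% n = e * g.
  rewrite /r1 modnMml -(modnDr (u * (p.-1 * e) * a)).
  have -> : u * (p.-1 * e) * a + n = (p.-1 * e * k) * n + e * g.
    have h1 : p.-1 * e * (g + u * a) = p.-1 * e * (k * n) by rewrite hk.
    move: h1; rewrite hn hd; case: p p1 {pp pd hnp hd hn r1} => [|p'] //= _.
    clear; move=> h1; nia.
  rewrite modnMDl modn_small // hn hd.
  by rewrite mulnAC -{1}(muln1 (e*g)) ltn_pmul2l // muln_gt0 e0 g0.
have r10 : 0 < r1.
  rewrite lt0n; apply/negP => /eqP h0; move: key; rewrite h0 mul0n mod0n => /esym /eqP.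
  by rewrite muln_eq0; case/orP => /eqP; lia.
exists r1.-1; first by have := ltn_mod (u * (p.-1 * e)) n; rewrite n0 /=; lia.
by rewrite prednK.
Qed.

Definition ev n (v : nat -> LV n) t : nat := nat_of_ord (eval v t : 'I_n.+1).

Section Sem.
Variables (n : nat) (v : nat -> LV n).
Local Notation ev := (@ev n v).

Lemma ev_le t : ev t <= n.
Proof. by rewrite /ev -ltnS. Qed.
Lemma vneg s : ev (TNeg s) = n - ev s.
Proof. by rewrite /ev /= inordK // ltnS leq_subr. Qed.
Lemma vopl s t : ev (TOplus s t) = minn n (ev s + ev t).
Proof. by rewrite /ev /= inordK // ltnS geq_minl. Qed.
Lemma vzero : ev TZero = 0.
Proof. by []. Qed.

Fixpoint Tmul r t := match r with 0 => TZero | r'.+1 => TOplus (Tmul r' t) t end.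
Definition Tprod s t := TNeg (TOplus (TNeg s) (TNeg t)).
Definition Tmax s t := TOplus (Tprod s (TNeg t)) t.
Definition Tmin s t := TNeg (Tmax (TNeg s) (TNeg t)).

Lemma vmul r t : ev (Tmul r t) = minn n (r * ev t).
Proof.
elim: r => [|r IH] /=; first by rewrite vzero mul0n minn0.
rewrite vopl IH; have := ev_le t; lia.
Qed.
Lemma vprod s t : ev (Tprod s t) = ev s + ev t - n.
Proof. rewrite /Tprod vneg vopl !vneg; have := ev_le t; have := ev_le s; lia. Qed.
Lemma vmax s t : ev (Tmax s t) = maxn (ev s) (ev t).
Proof. rewrite /Tmax vopl vprod vneg; have := ev_le t; have := ev_le s; lia. Qed.
Lemma vmin s t : ev (Tmin s t) = minn (ev s) (ev t).
Proof. rewrite /Tmin vneg vmax !vneg; have := ev_le t; have := ev_le s; lia. Qed.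
End Sem.

Definition Tis0 n t := TNeg (Tmul n t).
Definition Tdist s t := TOplus (Tprod s (TNeg t)) (Tprod t (TNeg s)).
Definition Teq n s t := Tis0 n (Tdist s t).
Definition Tfa n y x := Tmax (Tprod x y) (Tmin (TNeg (Tis0 n (TNeg (TOplus x y)))) (TOplus x y)).
Fixpoint Ty n r x := match r with 0 => x | r'.+1 => Tfa n (Ty n r' x) x end.
Definition Tsel n p t := Tmin (Teq n (TNeg t) (Tmul (p.-1) t)) t.
Fixpoint TDaux n p x r := match r with 0 => TZero | r'.+1 => Tmax (TDaux n p x r') (Tsel n p (Ty n r' x)) end.
Definition TD n p x := TDaux n p x n.
Fixpoint TC n p i := match i with 0 => TZero | i'.+1 => Tmax (TC n p i') (TD n p (TVar i')) end.

Section Sem2.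
Variables (n : nat) (v : nat -> LV n).
Local Notation ev := (@ev n v).

Lemma vis0 t : 0 < n -> ev (Tis0 n t) = if ev t == 0 then n else 0.
Proof. move=> n0; rewrite /Tis0 vneg vmul; case: eqP => h; rewrite ?h; nia. Qed.
Lemma vdist s t : ev (Tdist s t) = (ev s - ev t) + (ev t - ev s).
Proof. rewrite /Tdist vopl !vprod !vneg; have := ev_le v t; have := ev_le v s; lia. Qed.
Lemma veq s t : 0 < n -> ev (Teq n s t) = if ev s == ev t then n else 0.
Proof. move=> n0; rewrite /Teq vis0 // vdist; do 2 case: eqP; lia. Qed.
Lemma vfa y x : 0 < n -> ev (Tfa n y x) = if ev x + ev y < n then ev x + ev y else ev x + ev y - n.
Proof.
move=> n0; rewrite /Tfa vmax vprod vmin vneg vis0 // vneg vopl.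
have := ev_le v y; have := ev_le v x; case: eqP; case: ltnP; lia.
Qed.
Lemma vy r x : 0 < ev x < n -> ev (Ty n r x) = (r.+1 * ev x) %% n.
Proof.
move=> hx; have n0 : 0 < n by lia.
elim: r => [|r IH]; first by rewrite /= mul1n modn_small //; lia.
rewrite [Ty _ _ _]/=.
rewrite vfa // IH.
have -> : (r.+2 * ev x) %% n = ((r.+1 * ev x) %% n + ev x) %% n by rewrite modnDml mulSn addnC.
have hlt : (r.+1 * ev x) %% n < n by rewrite ltn_mod.
move: hlt; set y := (r.+1 * ev x) %% n => hlt.
case: ltnP => h; first by rewrite addnC modn_small // addnC.
have -> : y + ev x = (ev x + y - n) + n by lia.
rewrite modnDr modn_small //; lia.
Qed.
Lemma vsel p t : prime p -> p %| n -> ev (Tsel n p t) = if ev t == n %/ p then n %/ p else 0.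
Proof.
move=> pp /dvdnP [m hm]; have p2 := prime_gt1 pp.
have hd : n %/ p = m by rewrite hm mulnK //; lia.
rewrite /Tsel vmin hd.
have := ev_le v t => ht.
case: (posnP n) => [n0|n0].
  have t0 : ev t = 0 by lia.
  by rewrite t0 minn0; case: eqP; lia.
rewrite veq // vneg vmul.
case: eqP => h1; case: eqP => h2; nia.
Qed.

Lemma vDaux p x r : prime p -> p %| n -> ev (TDaux n p x r) = 0 \/ ev (TDaux n p x r) = n %/ p.
Proof.
move=> pp pn; elim: r => [|r IH] /=; first by left.
rewrite vmax vsel //; case: eqP => _; case: IH => ->; rewrite ?max0n ?maxn0 ?maxnn; by [left|right].
Qed.
Lemma vDhit p x r r' : prime p -> p %| n -> r' < r -> ev (Ty n r' x) = n %/ p -> ev (TDaux n p x r) = n %/ p.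
Proof.
move=> pp pn; elim: r => [|r IH] //= hr hy; rewrite vmax vsel //.
move: hr; rewrite ltnS leq_eqVlt => /orP [/eqP e | hr].
  subst r'; rewrite hy eqxx.
  by case: (@vDaux p x r pp pn) => ->; rewrite ?max0n ?maxnn.
by rewrite (IH hr hy); case: eqP => _; rewrite ?maxn0 ?maxnn.
Qed.
Lemma vC p i : prime p -> p %| n -> ev (TC n p i) = 0 \/ ev (TC n p i) = n %/ p.
Proof.
move=> pp pn; elim: i => [|i IH] /=; first by left.
rewrite vmax; case: (@vDaux p (TVar i) n pp pn) => ->; case: IH => ->; rewrite ?max0n ?maxn0 ?maxnn; by [left|right].
Qed.
Lemma vC0 p i j : j < i -> ev (TC n p i) = 0 -> ev (TD n p (TVar j)) = 0.
Proof.
elim: i => [|i IH] //=; rewrite vmax ltnS leq_eqVlt => /orP [/eqP -> | hj] h.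
  lia.
apply: IH => //; lia.
Qed.
Lemma boolvals N : 0 < n -> (forall p, prime p -> p %| n -> ev (TC n p N) = 0) ->
  forall j, j < N -> ev (TVar j) = 0 \/ ev (TVar j) = n.
Proof.
move=> n0 hC j hj.
have := ev_le v (TVar j).
case: (posnP (ev (TVar j))) => [->|a0]; first by left.
rewrite leq_eqVlt => /orP [/eqP ->|an]; first by right.
exfalso.
have [p [pp pn [r rn hr]]] := arith (ltac:(lia) : 0 < ev (TVar j) < n).
have hm : 0 < n %/ p by rewrite divn_gt0 ?prime_gt0 // dvdn_leq.
have h1 : ev (TD n p (TVar j)) = n %/ p.
  apply: (vDhit _ _ rn) => //; rewrite vy //; lia.
have := @vC0 p N j hj (hC p pp pn); lia.
Qed.
End Sem2.

Fixpoint tsubst (s : nat -> term) t := match t with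
  | TVar i => s i | TZero => TZero | TNeg u => TNeg (tsubst s u)
  | TOplus u w => TOplus (tsubst s u) (tsubst s w) end.

Lemma eval_subst (A : mvAlg) (v : nat -> A) s t :
  eval v (tsubst s t) = eval (fun i => eval v (s i)) t.
Proof. by elim: t => //= [u -> | u -> w ->]. Qed.

Fixpoint tmax t := match t with
  | TVar i => i.+1 | TZero => 0 | TNeg s => tmax s | TOplus s u => maxn (tmax s) (tmax u) end.

Lemma eval_ext (A : mvAlg) (v v' : nat -> A) t :
  (forall i, i < tmax t -> v i = v' i) -> eval v t = eval v' t.
Proof.
elim: t => //= [i h | s IH h | s IHs u IHu h]; first by apply: h.
  by rewrite IH.
rewrite IHs ?IHu // => i hi; apply: h; lia.
Qed.

Definition qmax (q : quasi_identity) :=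
  foldr (fun e acc => maxn (maxn (tmax e.1) (tmax e.2)) acc) (maxn (tmax q.2.1) (tmax q.2.2)) q.1.

Lemma qmax_prem q e : List.In e q.1 -> tmax e.1 <= qmax q /\ tmax e.2 <= qmax q.
Proof.
case: q => l c; rewrite /qmax /=; elim: l => //= a l IH [-> | h]; first lia.
have := IH h; lia.
Qed.

Lemma qmax_concl q : tmax q.2.1 <= qmax q /\ tmax q.2.2 <= qmax q.
Proof. case: q => l c; rewrite /qmax /=; elim: l => //= [|a l IH]; lia. Qed.

Lemma inP (T : eqType) (x : T) (s : seq T) : x \in s -> List.In x s.
Proof. elim: s => //= a s IH; rewrite in_cons => /orP [/eqP -> | h]; [by left | right; exact: IH]. Qed.

Lemma inP' (T : eqType) (x : T) (s : seq T) : List.In x s -> x \in s.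
Proof. elim: s => //= a s IH [-> | h]; rewrite in_cons ?eqxx //; by rewrite IH ?orbT. Qed.

Definition scale m n (x : LV m) : LV n := inord ((x : 'I_m.+1) * (n %/ m)).

Lemma scaleE m n (x : LV m) : 0 < m -> m %| n ->
  nat_of_ord (scale n x : 'I_n.+1) = (x : 'I_m.+1) * (n %/ m).
Proof.
move=> m0 /dvdnP [k ->]; rewrite /scale mulnK // inordK //.
have := ltn_ord (x : 'I_m.+1); rewrite !ltnS => h; by rewrite [k * m]mulnC leq_mul2r h orbT.
Qed.

Lemma scale_hom m n : 0 < m -> m %| n -> is_hom (@scale m n).
Proof.
move=> m0 mn; have := mn; move=> /dvdnP [k hk].
have hd : n %/ m = k by rewrite hk mulnK.
split.
- by apply: ord_inj; rewrite scaleE.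
- move=> x; apply: ord_inj.
  have h1 : nat_of_ord (@mv_neg (LV m) x : 'I_m.+1) = m - (x : 'I_m.+1) by rewrite /= inordK // ltnS leq_subr.
  have h2 : nat_of_ord (@mv_neg (LV n) (scale n x) : 'I_n.+1) = n - (scale n x : 'I_n.+1) by rewrite /= inordK // ltnS leq_subr.
  by rewrite scaleE // h1 h2 scaleE // hd hk mulnBl [m * k]mulnC.
- move=> x y; apply: ord_inj.
  have h1 : nat_of_ord (@mv_oplus (LV m) x y : 'I_m.+1) = minn m ((x : 'I_m.+1) + (y : 'I_m.+1)) by rewrite /= inordK // ltnS geq_minl.
  have h2 : nat_of_ord (@mv_oplus (LV n) (scale n x) (scale n y) : 'I_n.+1) = minn n ((scale n x : 'I_n.+1) + (scale n y : 'I_n.+1)) by rewrite /= inordK // ltnS geq_minl.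
  by rewrite scaleE // h1 h2 !scaleE // hd hk -mulnDl [k * m]mulnC minnMl.
Qed.

Lemma scale_inj m n : 0 < m -> m %| n -> 0 < n -> injective (@scale m n).
Proof.
move=> m0 mn n0 x y /(congr1 (fun z : LV n => nat_of_ord (z : 'I_n.+1))).
have k0 : 0 < n %/ m by rewrite divn_gt0 // dvdn_leq.
rewrite !scaleE // => /eqP; rewrite eqn_pmul2r // => /eqP; exact: ord_inj.
Qed.

Lemma hom_const (A B : mvAlg) (f : A -> B) (a : A) t :
  is_hom f -> eval (fun _ => f a) t = f (eval (fun _ => a) t).
Proof. move=> hf; exact: (hom_eval (fun _ => a) t hf). Qed.

Lemma hom_id (A : mvAlg) : is_hom (fun x : A => x). Proof. by []. Qed.

Lemma bool_red n (q : quasi_identity) (w : nat -> LV n) : 0 < n -> sat (LV 1) q ->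
  (forall j, j < qmax q -> ev w (TVar j) = 0 \/ ev w (TVar j) = n) ->
  (forall e, List.In e q.1 -> eval w e.1 = eval w e.2) -> eval w q.2.1 = eval w q.2.2.
Proof.
move=> n0 hq hb hp.
pose w' (j : nat) : LV 1 := (if ev w (TVar j) == n then ord_max else ord0 : 'I_2).
have hs := @scale_hom 1 n (ltn0Sn 0) (dvd1n n).
have hi := @scale_inj 1 n (ltn0Sn 0) (dvd1n n) n0.
have hw : forall t, tmax t <= qmax q -> eval w t = scale n (eval w' t).
  move=> t ht; rewrite -hom_eval //; apply: eval_ext => i hi'.
  apply: ord_inj; rewrite scaleE // divn1 /w'.
  change (ev w (TVar i) = nat_of_ord (if ev w (TVar i) == n then ord_max else ord0 : 'I_2) * n).
  have : i < qmax q by lia.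
  move/hb => hh; case: eqP => [e|ne] /=; rewrite ?mul1n ?mul0n; lia.
have hc := qmax_concl q.
rewrite (hw _ (proj1 hc)) (hw _ (proj2 hc)); congr (scale n _); apply: hq => e he.
have hpe := qmax_prem he.
apply: hi; rewrite -(hw _ (proj1 hpe)) -(hw _ (proj2 hpe)); exact: hp.
Qed.

Definition gP p : prodA (LV p) (LV 1) := ((inord 1 : 'I_p.+1), (ord0 : 'I_2)).

Lemma zform n p (z : LV n) : 0 < n -> prime p -> p %| n ->
  (nat_of_ord (z : 'I_n.+1) = 0 -> z = (fun x : prodA (LV p) (LV 1) => scale n x.2) (gP p)) /\
  (nat_of_ord (z : 'I_n.+1) = n %/ p -> z = (fun x : prodA (LV p) (LV 1) => scale n x.1) (gP p)).
Proof.
move=> n0 pp pn; have p1 := prime_gt1 pp; split => h; apply: ord_inj; rewrite h scaleE //= ?inordK //.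
all: try lia.
Qed.

Lemma sat_eqR n p (A : mvAlg) (v : nat -> A) N R S : 0 < n -> prime p -> p %| n ->
  Qgen (single (LV n)) A ->
  eval (fun _ => gP p) R = eval (fun _ => gP p) S ->
  eval (fun _ => eval v (TC n p N)) R = eval (fun _ => eval v (TC n p N)) S.
Proof.
move=> n0 pp pn hA hRS.
have p0 := prime_gt0 pp.
have hsat : sat (LV n) ([::], (tsubst (fun _ => TC n p N) R, tsubst (fun _ => TC n p N) S)).
  move=> w _ /=; rewrite !eval_subst.
  case: (@vC n w p N pp pn) => h.
  - rewrite ((zform _ n0 pp pn).1 h).
    have hf : is_hom (fun x : prodA (LV p) (LV 1) => scale n x.2).
      exact: hom_comp (@hom_snd _ _) (@scale_hom 1 n (ltn0Sn 0) (dvd1n n)).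
    by rewrite (@hom_const _ _ _ (gP p) R hf) (@hom_const _ _ _ (gP p) S hf) hRS.
  - rewrite ((zform _ n0 pp pn).2 h).
    have hf : is_hom (fun x : prodA (LV p) (LV 1) => scale n x.1).
      exact: hom_comp (@hom_fst _ _) (@scale_hom p n p0 pn).
    by rewrite (@hom_const _ _ _ (gP p) R hf) (@hom_const _ _ _ (gP p) S hf) hRS.
have hAs : sat A ([::], (tsubst (fun _ => TC n p N) R, tsubst (fun _ => TC n p N) S)).
  by apply: hA => B ->.
by move: (hAs v); rewrite /= !eval_subst; apply.
Qed.

Lemma sat_neR n p (A : mvAlg) (v : nat -> A) N R S : 0 < n -> prime p -> p %| n ->
  Qgen (single (LV n)) A -> eval v (TC n p N) <> @mv_zero A ->
  (eval (fun _ => gP p) R).1 <> (eval (fun _ => gP p) S).1 ->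
  eval (fun _ => eval v (TC n p N)) R <> eval (fun _ => eval v (TC n p N)) S.
Proof.
move=> n0 pp pn hA hnz hRS heq.
have p0 := prime_gt0 pp.
have hsat : sat (LV n) ([:: (tsubst (fun _ => TC n p N) R, tsubst (fun _ => TC n p N) S)], (TC n p N, TZero)).
  move=> w /= hp; have := hp _ (or_introl erefl); rewrite /= !eval_subst.
  case: (@vC n w p N pp pn) => h.
  - by move=> _; apply: ord_inj; change (ev w (TC n p N) = 0); rewrite h.
  - rewrite ((zform _ n0 pp pn).2 h).
    have hf : is_hom (fun x : prodA (LV p) (LV 1) => scale n x.1).
      exact: hom_comp (@hom_fst _ _) (@scale_hom p n p0 pn).
    rewrite (@hom_const _ _ _ (gP p) R hf) (@hom_const _ _ _ (gP p) S hf).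
    by move=> /(@scale_inj p n p0 pn n0) e; exfalso; apply: hRS.
have hAs : sat A ([:: (tsubst (fun _ => TC n p N) R, tsubst (fun _ => TC n p N) S)], (TC n p N, TZero)).
  by apply: hA => B ->.
apply: hnz; apply: (hAs v) => e /= [<- | []] /=; by rewrite !eval_subst.
Qed.

Definition Tg p (x : prodA (LV p) (LV 1)) : term :=
  if nat_of_ord (x.2 : 'I_2) == 0 then Tmul (x.1 : 'I_p.+1) (TVar 0)
  else TNeg (Tmul (p - (x.1 : 'I_p.+1)) (TVar 0)).

Lemma Tg_eval p (x : prodA (LV p) (LV 1)) : 0 < p -> eval (fun _ => gP p) (Tg x) = x.
Proof.
move=> p0.
have e1 t : (eval (fun _ => gP p) t).1 = eval (fun _ => (gP p).1) t.
  by rewrite (@hom_const _ _ _ (gP p) t (@hom_fst _ _)).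
have e2 t : (eval (fun _ => gP p) t).2 = eval (fun _ => (gP p).2) t.
  by rewrite (@hom_const _ _ _ (gP p) t (@hom_snd _ _)).
case: x => a b.
have ha := ltn_ord (a : 'I_p.+1).
have hv : ev (fun _ => (gP p).1) (TVar 0) = 1 by rewrite /ev /= inordK.
apply: injective_projections; rewrite ?e1 ?e2; apply: ord_inj.
- change (ev (fun _ => (gP p).1) (Tg (a, b)) = nat_of_ord (a : 'I_p.+1)).
  rewrite /Tg /=; case: eqP => _; rewrite ?vneg vmul hv; lia.
- change (ev (fun _ => (gP p).2) (Tg (a, b)) = nat_of_ord (b : 'I_2)).
  have hb := ltn_ord (b : 'I_2).
  have hv2 : ev (fun _ => (gP p).2) (TVar 0) = 0 by [].
  rewrite /Tg /=; case: eqP => h; rewrite ?vneg vmul hv2; lia.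
Qed.

Definition hP p (A : mvAlg) (c : A) (x : prodA (LV p) (LV 1)) : prodA A (LV 1) :=
  (eval (fun _ => c) (Tg x), x.2).

Lemma core n (A : mvAlg) (Q : mvClass) : 0 < n -> is_quasivariety Q -> Q A -> Q (LV 1) ->
  Qgen (single (LV n)) A -> ~ Qgen (single (LV 1)) A ->
  exists p, [/\ prime p, p %| n & Q (prodA (LV p) (LV 1))].
Proof.
move=> n0 hQ QA QL hA nB.
have [phi hphi] := not_all_ex_not _ _ nB.
have [hL nsat] := imply_to_and _ _ hphi.
have hL1 : sat (LV 1) phi by apply: hL.
have [v hv] := not_all_ex_not _ _ nsat.
have [hprem nconc] := imply_to_and _ _ hv.
set N := qmax phi.
pose Psi : quasi_identity := (phi.1 ++ List.map (fun p => (TC n p N, TZero)) (primes n), phi.2).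
have hPsi : sat (LV n) Psi.
  move=> w hp; apply: (bool_red n0 hL1); last first.
    by move=> e he; apply: hp; rewrite /Psi /=; apply: List.in_or_app; left.
  apply: boolvals => // p pp pn.
  have : eval w (TC n p N) = eval w TZero.
    apply: (hp (TC n p N, TZero)); rewrite /Psi /=; apply: List.in_or_app; right.
    apply: (List.in_map (fun p => (TC n p N, TZero))); apply: inP; by rewrite mem_primes pp n0 pn.
  by move/(congr1 (fun z : LV n => nat_of_ord (z : 'I_n.+1))).
have hAPsi : sat A Psi by apply: hA => B ->.
have [p hp] : exists p, ~ (p \in primes n -> eval v (TC n p N) = eval v TZero).
  apply: not_all_not_ex => hall; apply: nconc; apply: hAPsi => e.
  rewrite /Psi /= => he; case: (List.in_app_or _ _ _ he) => {}he; first exact: hprem.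
  case: (proj1 (List.in_map_iff _ _ _) he) => p' [<- hp'] /=.
  by apply: NNPP => h; apply: (hall p') => hh; exfalso; apply: h; apply: hh; apply: inP'.
have [pin hnz] := imply_to_and _ _ hp.
move: pin; rewrite mem_primes => /and3P [pp _ pn].
have p0 := prime_gt0 pp.
set c := eval v (TC n p N).
have hI := @sat_eqR n p A v N _ _ n0 pp pn hA.
have hII := @sat_neR n p A v N _ _ n0 pp pn hA hnz.
exists p; split => //.
apply: (@qv_inj Q (prodA (LV p) (LV 1)) (prodA A (LV 1)) (@hP p A c) hQ).
- exact: qv_prod.
- split.
  + by [].
  + move=> x; rewrite /hP; congr (_, _).
    change (eval (fun _ => c) (Tg (mv_neg x)) = eval (fun _ => c) (TNeg (Tg x))).
    by apply: hI; rewrite /= !Tg_eval.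
  + move=> x y; rewrite /hP; congr (_, _).
    change (eval (fun _ => c) (Tg (mv_oplus x y)) = eval (fun _ => c) (TOplus (Tg x) (Tg y))).
    by apply: hI; rewrite /= !Tg_eval.
- move=> x y; rewrite /hP => [[h1 h2]].
  apply: injective_projections => //.
  apply: NNPP => hne; apply: (hII (Tg x) (Tg y)) => //.
  by rewrite !Tg_eval.
Qed.

Lemma L1_in_P q : 0 < q -> Qgen (single (prodA (LV q) (LV 1))) (LV 1).
Proof.
move=> q0.
apply: (@Qgen_inj (LV 1) (prodA (LV q) (LV 1)) (fun x => (scale q x, x))).
- exact: hom_pair (@scale_hom 1 q (ltn0Sn 0) (dvd1n q)) (@hom_id _).
- by move=> x y [].
Qed.

Lemma P_notBool q : 1 < q -> ~ Qgen (single (LV 1)) (prodA (LV q) (LV 1)).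
Proof.
move=> q1 h.
have hs : sat (LV 1) ([::], (TOplus (TVar 0) (TVar 0), TVar 0)).
  move=> w _ /=; apply: ord_inj.
  change (ev w (TOplus (TVar 0) (TVar 0)) = ev w (TVar 0)).
  rewrite vopl; have := ev_le w (TVar 0); lia.
have := h _ (fun B e => eq_ind_r (fun B => sat B _) hs e) (fun _ => gP q) (fun e (he : List.In e [::]) => match he with end).
move/(congr1 (fun x : prodA (LV q) (LV 1) => nat_of_ord (x.1 : 'I_q.+1))).
rewrite /= !inordK //; try lia.
Qed.

Lemma P_in_Lk q k : 0 < q -> q %| k -> 0 < k -> Qgen (single (LV k)) (prodA (LV q) (LV 1)).
Proof.
move=> q0 qk k0 s hs.
have hf : is_hom (fun x : prodA (LV q) (LV 1) => (scale k x.1, scale k x.2) : prodA (LV k) (LV k)).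
  apply: hom_pair.
  - exact: hom_comp (@hom_fst _ _) (@scale_hom q k q0 qk).
  - exact: hom_comp (@hom_snd _ _) (@scale_hom 1 k (ltn0Sn 0) (dvd1n k)).
apply: (sat_inj hf).
- move=> [a b] [c d] /= [/(@scale_inj q k q0 qk k0) -> /(@scale_inj 1 k (ltn0Sn 0) (dvd1n k) k0) ->] //.
- by apply: sat_prod; apply: hs.
Qed.

Lemma Bool_strict q : prime q ->
  strict_subclass (Qgen (single (LV 1))) (Qgen (single (prodA (LV q) (LV 1)))).
Proof.
move=> pq; have q1 := prime_gt1 pq; split.
- apply: Qgen_single_sub; apply: L1_in_P; lia.
- move=> h; apply: (P_notBool q1); apply: h; exact: Qgen_single_in.
Qed.

Unset Implicit Arguments.
Theorem theorem5p5 (k : nat) (hk : 1 < k) (Q : mvClass) :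
  ( is_quasivariety Q /\
    strict_subclass (Qgen (single (LV 1))) Q /\
    subclass Q (Qgen (single (LV k))) /\
    (forall Q' : mvClass,
       is_quasivariety Q' ->
       strict_subclass (Qgen (single (LV 1))) Q' ->
       subclass Q' (Qgen (single (LV k))) ->
       subclass Q' Q -> subclass Q Q') )
  <->
  (exists q : nat, prime q /\ q %| k /\
     sameclass Q (Qgen (single (prodA (LV q) (LV 1))))).
Proof.
have k0 : 0 < k by lia.
split.
- move=> [hQ [[hsub hnot] [hV hmin]]].
  have [A hA] := not_all_ex_not _ _ hnot.
  have [QA nB] := imply_to_and _ _ hA.
  have QL : Q (LV 1) by apply: hsub; exact: Qgen_single_in.
  have [p [pp pk QP]] := core k0 hQ QA QL (hV A QA) nB.
  have p0 := prime_gt0 pp.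
  exists p; split => //; split => //; split.
  + apply: hmin.
    * exact: Qgen_qv.
    * exact: Bool_strict.
    * exact: Qgen_single_sub (P_in_Lk p0 pk k0).
    * exact: qv_sub hQ QP.
  + exact: qv_sub hQ QP.
- move=> [q [pq [qk [h1 h2]]]].
  have q0 := prime_gt0 pq.
  have hPk := P_in_Lk q0 qk k0.
  split; [|split; [|split]].
  + exists (fun s => forall B, single (prodA (LV q) (LV 1)) B -> sat B s) => A; split.
    * move=> QA; exact: (h1 A QA).
    * move=> H; apply: (h2 A); exact: H.
  + have [hs hn] := Bool_strict pq; split.
    * move=> A HA; apply: (h2 A); exact: (hs A HA).
    * move=> h; apply: hn => A HA; apply: (h A); exact: (h2 A HA).
  + move=> A QA; have := @Qgen_single_sub _ _ hPk A (h1 A QA); exact.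
  + move=> Q' hQ' [hB' hnB'] hV' hQ'Q.
    have [A hA] := not_all_ex_not _ _ hnB'.
    have [QA nB] := imply_to_and _ _ hA.
    have QL : Q' (LV 1) by apply: hB'; exact: Qgen_single_in.
    have AP : Qgen (single (LV q)) A.
      exact: Qgen_single_sub (P_in_Lk q0 (dvdnn q) q0) A (h1 A (hQ'Q A QA)).
    have [p [pp pq' QP]] := core q0 hQ' QA QL AP nB.
    have ep : p = q by apply/(prime_nt_dvdP pq) => //; rewrite eqn_leq negb_and -ltnNge (prime_gt1 pp).
    subst p.
    move=> A' QA'; have := qv_sub hQ' QP (h1 A' QA'); exact.
Qed.
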